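(* Let $(\mathcal S,\mathcal A,P,r)$ be any finite MDP (general/multichain) and $(g^\star,h^\star)$ a solution of the modified Bellman equations. Let $V^0\in\mathbb R^n$, $0\le\lambda_k<1$ for $k\ge1$, and $V^k=\lambda_kV^{k-1}+(1-\lambda_k)TV^{k-1}$ for $k\ge1$ (Relaxed Value Iteration). Then for every $k\ge1$, \[\Big\|\frac{V^k-V^0}{\sum_{i=1}^k(1-\lambda_i)}-g^\star\Big\|_\infty\le\frac{2\big(1-\prod_{i=1}^k\lambda_i\big)}{\sum_{i=1}^k(1-\lambda_i)}\|V^0-h^\star\|_\infty.\]
   Context: An MDP $(\mathcal S,\mathcal A,P,r)$ has finite state space $\mathcal S$ ($|\mathcal S|=n$, functions identified with $\mathbb R^n$), finite action space, transition probabilities $P(s'\mid s,a)$ and bounded reward $r$. The Bellman optimality operator is $(TV)(s)=\max_a\{r(s,a)+\sum_{s'}P(s'\mid s,a)V(s')\}$. $g^\star(s)=\max_\pi\liminf_{T\to\infty}\frac1T\mathbb E_\pi[\sum_{t=0}^{T-1}r(s_t,a_t)\mid s_0=s]$ is the optimal average reward. A pair $(g,h)$ solves the modified Bellman equations if $\max_a\sum_{s'}P(s'\mid s,a)g(s')=g(s)$ and $\max_a\{r(s,a)+\sum_{s'}P(s'\mid s,a)h(s')\}=h(s)+g(s)$ for all $s$, with some policy attaining both maxima simultaneously; the first component of any solution equals $g^\star$. *)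

(* Defs.v *)
From mathcomp Require Import all_boot all_order all_algebra.
Set Implicit Arguments. Unset Strict Implicit. Unset Printing Implicit Defensive.
Import Order.TTheory GRing.Theory Num.Theory.
Local Open Scope ring_scope.

Section MDP.
Variables (R : realFieldType) (S A : finType).

(* maximum over the (finite, nonempty: a0 is a witness) action space;
   the value does not depend on the witness a0 *)
Definition maxA (a0 : A) (f : A -> R) : R := \big[Num.max/f a0]_(a : A) f a.

Definition stochastic (P : S -> A -> S -> R) : Prop :=
  (forall s a s', 0 <= P s a s') /\ (forall s a, \sum_(s' : S) P s a s' = 1).

Definition expP (P : S -> A -> S -> R) (s : S) (a : A) (V : S -> R) : R :=
  \sum_(s' : S) P s a s' * V s'.

Definition bellmanT (a0 : A) (P : S -> A -> S -> R) (r : S -> A -> R)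
  (V : S -> R) : S -> R :=
  fun s => maxA a0 (fun a => r s a + expP P s a V).

Definition supnorm (v : S -> R) : R := \big[Num.max/0]_(s : S) `|v s|.

Definition modified_bellman (a0 : A) (P : S -> A -> S -> R) (r : S -> A -> R)
  (g h : S -> R) : Prop :=
  (forall s, maxA a0 (fun a => expP P s a g) = g s) /\
  (forall s, maxA a0 (fun a => r s a + expP P s a h) = h s + g s) /\
  (exists pi : S -> A, forall s,
      expP P s (pi s) g = g s /\ r s (pi s) + expP P s (pi s) h = h s + g s).

End MDP.

(* Main.v *)
Require Import Defs.
From mathcomp Require Import all_boot all_order all_algebra.
From mathcomp Require Import ring lra.
Import Order.TTheory GRing.Theory Num.Theory.
Local Open Scope ring_scope.

Section Aux.
Variables (R : realFieldType) (S A : finType).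

Lemma le_bigmax_seq (T : eqType) (x0 : R) (F : T -> R) (s : seq T) a :
  a \in s -> F a <= \big[Num.max/x0]_(i <- s) F i.
Proof.
elim: s => // b s IH; rewrite inE big_cons => /orP [/eqP->|/IH H].
  by rewrite le_max lexx.
by rewrite le_max H orbT.
Qed.

Lemma maxA_ge (a0 : A) (f : A -> R) a : f a <= Defs.maxA a0 f.
Proof. by rewrite /Defs.maxA; apply: le_bigmax_seq; rewrite mem_index_enum. Qed.

Lemma maxA_le (a0 : A) (f : A -> R) c : (forall a, f a <= c) -> Defs.maxA a0 f <= c.
Proof.
move=> H; rewrite /Defs.maxA; apply: (big_ind (fun x => x <= c)) => //.
by move=> x y hx hy; rewrite ge_max hx hy.
Qed.

Lemma expP_lin (P : S -> A -> S -> R) s a (h g : S -> R) t :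
  expP P s a (fun s' => h s' + t * g s') = expP P s a h + t * expP P s a g.
Proof.
rewrite /expP mulr_sumr -big_split /=; apply: eq_bigr => i _; ring.
Qed.

Lemma expP_le (P : S -> A -> S -> R) s a (V U : S -> R) c :
  stochastic P -> (forall s, V s <= U s + c) ->
  expP P s a V <= expP P s a U + c.
Proof.
move=> [P0 P1] H; rewrite /expP.
have -> : c = \sum_(s' : S) P s a s' * c by rewrite -mulr_suml P1 mul1r.
rewrite -big_split /=; apply: ler_sum => i _.
by rewrite -mulrDr ler_wpM2l.
Qed.

Lemma T_le (a0 : A) (P : S -> A -> S -> R) r (V U : S -> R) c s :
  stochastic P -> (forall s, V s <= U s + c) ->
  bellmanT a0 P r V s <= bellmanT a0 P r U s + c.
Proof.
move=> sP H; rewrite /bellmanT; apply: maxA_le => a.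
apply: le_trans (_ : r s a + expP P s a U + c <= _).
  by rewrite -addrA lerD2l; apply: expP_le.
by rewrite lerD2r; apply: (maxA_ge a0 (fun a => r s a + expP P s a U)).
Qed.

Lemma T_nonexp (a0 : A) (P : S -> A -> S -> R) r (V U : S -> R) (c : R) s :
  stochastic P -> (forall s, `|V s - U s| <= c) ->
  `|bellmanT a0 P r V s - bellmanT a0 P r U s| <= c.
Proof.
move=> sP H.
have h1 : bellmanT a0 P r V s <= bellmanT a0 P r U s + c.
  apply: T_le => // s0; move: (H s0); rewrite ler_norml => /andP[]; lra.
have h2 : bellmanT a0 P r U s <= bellmanT a0 P r V s + c.
  apply: T_le => // s0; move: (H s0); rewrite ler_norml => /andP[]; lra.
rewrite ler_norml; apply/andP; split; lra.
Qed.

Lemma T_affine (a0 : A) (P : S -> A -> S -> R) r (g h : S -> R) (t : R) s :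
  modified_bellman a0 P r g h -> 0 <= t ->
  bellmanT a0 P r (fun s => h s + t * g s) s = h s + (t + 1) * g s.
Proof.
move=> [Hg [Hh [pi Hpi]]] t0; apply/eqP; rewrite eq_le; apply/andP; split.
  rewrite /bellmanT; apply: maxA_le => a; rewrite expP_lin.
  have e1 := maxA_ge a0 (fun a => r s a + expP P s a h) a.
  have e2 := maxA_ge a0 (fun a => expP P s a g) a.
  rewrite /= Hh in e1; rewrite /= Hg in e2.
  have : t * expP P s a g <= t * g s by rewrite ler_wpM2l.
  lra.
have [p1 p2] := Hpi s.
apply: le_trans (maxA_ge a0 _ (pi s)).
by rewrite /= expP_lin p1 addrA p2 mulrDl mul1r; lra.
Qed.

Lemma supnorm_ge (v : S -> R) s : `|v s| <= supnorm v.
Proof.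
by rewrite /supnorm; apply: (le_bigmax_seq _ 0 (fun s => `|v s|)); rewrite mem_index_enum.
Qed.

Lemma supnorm_le (v : S -> R) c : 0 <= c -> (forall s, `|v s| <= c) -> supnorm v <= c.
Proof.
move=> c0 H; rewrite /supnorm; apply: (big_ind (fun x => x <= c)) => //.
by move=> x y hx hy; rewrite ge_max hx hy.
Qed.

End Aux.
Theorem theorem7 (R : realFieldType) (S A : finType) (a0 : A)
  (P : S -> A -> S -> R) (r : S -> A -> R) (g h : S -> R)
  (lambda : nat -> R) (V : nat -> S -> R) :
  stochastic P ->
  modified_bellman a0 P r g h ->
  (forall k, (1 <= k)%N -> 0 <= lambda k < 1) ->
  (forall k, (1 <= k)%N ->
     V k = (fun s => lambda k * V k.-1 s + (1 - lambda k) * bellmanT a0 P r (V k.-1) s)) ->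
  forall k, (1 <= k)%N ->
    supnorm (fun s => (V k s - V 0%N s) / (\sum_(1 <= i < k.+1) (1 - lambda i)) - g s)
    <= 2 * (1 - \prod_(1 <= i < k.+1) lambda i) / (\sum_(1 <= i < k.+1) (1 - lambda i))
       * supnorm (fun s => V 0%N s - h s).
Proof.
move=> sP mb Hl HV k k1.
set d := supnorm (fun s => V 0%N s - h s).
pose tau n := \sum_(1 <= i < n.+1) (1 - lambda i).
pose Pi n := \prod_(1 <= i < n.+1) lambda i.
have tau0 : tau 0%N = 0 by rewrite /tau big_geq.
have tauS n : tau n.+1 = tau n + (1 - lambda n.+1) by rewrite /tau big_nat_recr.
have Pi0 : Pi 0%N = 1 by rewrite /Pi big_geq.
have PiS n : Pi n.+1 = Pi n * lambda n.+1 by rewrite /Pi big_nat_recr.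
have d0 : 0 <= d.
  rewrite /d /supnorm; apply: (big_ind (fun x => 0 <= x)) => // x y.
  by rewrite le_max => ->.
have key : forall n, [/\ 0 <= tau n, 0 <= Pi n <= 1 &
    forall s, `|V n s - (h s + tau n * g s)| <= d /\
      `|V n s - (h s + tau n * g s) - (V 0%N s - h s)| <= 2 * d * (1 - Pi n)].
  elim => [|n [t0 /andP[p0 p1] IH]].
    rewrite tau0 Pi0; split; rewrite ?lexx ?ler01 //= => s.
    rewrite mul0r addr0 subrr normr0 subrr mulr0 lexx; split => //.
    exact: (supnorm_ge _ _ (fun s => V 0%N s - h s)).
  have /andP[l0 l1] := Hl n.+1 erefl.
  have t1 : 0 <= tau n.+1 by rewrite tauS; lra.
  rewrite tauS PiS (HV n.+1 erefl) /=.
  split; first lra.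
    by apply/andP; split; [apply: mulr_ge0 | rewrite mulr_ile1 //]; lra.
  move=> s.
  have hT := T_nonexp _ _ _ a0 P r (V n) (fun s => h s + tau n * g s) d s sP (fun s => (IH s).1).
  rewrite T_affine // in hT.
  have [i1 i2] := IH s.
  move: hT i1 i2 (supnorm_ge _ _ (fun s => V 0%N s - h s) s).
  rewrite -/d /= !ler_norml.
  set W := V n s; set TW := bellmanT a0 P r (V n) s.
  set a := W - (h s + tau n * g s).
  have -> : TW - (h s + (tau n + 1) * g s) = TW - (h s + tau n * g s) - g s by ring.
  set b := TW - _ - _.
  have -> : lambda n.+1 * W + (1 - lambda n.+1) * TW - (h s + (tau n + (1 - lambda n.+1)) * g s)
     = lambda n.+1 * a + (1 - lambda n.+1) * b by rewrite /a /b; ring.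
  set e := V 0%N s - h s.
  move=> /andP[b1 b2] /andP[a1 a2] /andP[c1 c2] /andP[e1 e2].
  have q1 : 0 <= lambda n.+1 * (d - a) by apply: mulr_ge0; lra.
  have q2 : 0 <= lambda n.+1 * (d + a) by apply: mulr_ge0; lra.
  have q3 : 0 <= (1 - lambda n.+1) * (d - b) by apply: mulr_ge0; lra.
  have q4 : 0 <= (1 - lambda n.+1) * (d + b) by apply: mulr_ge0; lra.
  have q5 : 0 <= lambda n.+1 * (2 * d * (1 - Pi n) - (a - e)) by apply: mulr_ge0; lra.
  have q6 : 0 <= lambda n.+1 * (2 * d * (1 - Pi n) + (a - e)) by apply: mulr_ge0; lra.
  have q7 : 0 <= (1 - lambda n.+1) * (d - e) by apply: mulr_ge0; lra.
  have q8 : 0 <= (1 - lambda n.+1) * (d + e) by apply: mulr_ge0; lra.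
  split; apply/andP; split; nra.
have [tk /andP[pk0 pk1] Hk] := key k.
have tpos : 0 < tau k.
  case: k k1 tk pk0 pk1 Hk => // k' _ _ _ _ _; rewrite tauS.
  have /andP[l0 l1] := Hl k'.+1 erefl.
  have [tk' _ _] := key k'; lra.
rewrite -/(tau k) -/(Pi k).
apply: supnorm_le.
  apply: mulr_ge0 => //; apply: divr_ge0; lra.
move=> s; have [_ H2] := Hk s.
have -> : (V k s - V 0%N s) / tau k - g s
   = (V k s - (h s + tau k * g s) - (V 0%N s - h s)) / tau k.
  by field; rewrite gt_eqF.
rewrite normrM normfV (gtr0_norm tpos) ler_pdivrMr //.
have -> : 2 * (1 - Pi k) / tau k * d * tau k = 2 * d * (1 - Pi k).
  by field; rewrite gt_eqF.
exact: H2.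
Qed.
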